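(* Let $(\Theta,\mathbf{Q},\leq)$ be a $\Theta$-projective system of size $t$ in an artin triangulated $R$-category $\mathcal{T}$, with triangles $K(i)\to Q(i)\xrightarrow{\beta_i}\Theta(i)\to K(i)[1]$. Then: (a) for each $i\in[1,t]$, $\beta_i:Q(i)\to\Theta(i)$ is a $\mathcal{P}(\Theta)$-cover of $\Theta(i)$; (b) if $(\Theta,\mathbf{Q}',\leq)$ is another $\Theta$-projective system of size $t$ in $\mathcal{T}$ with maps $\beta'_i:Q'(i)\to\Theta(i)$, then for each $i$ there is an isomorphism $\rho_i:Q(i)\to Q'(i)$ with $\beta'_i\rho_i=\beta_i$.
   Context: Artin triangulated $R$-category: triangulated, $R$ commutative artinian, Hom-sets finitely generated $R$-modules, $R$-bilinear composition, $R$-linear shift, Krull–Schmidt. $\mathfrak{F}(\mathcal{X})$: objects $M$ admitting distinguished triangles $M_{k-1}\to M_k\to X_k\to M_{k-1}[1]$ ($k=0,\dots,n$), $M_{-1}=0=X_0$, $M_n=M$, $X_k\in\mathcal{X}$ for $k\ge1$. A $\Theta$-projective system of size $t$: $\le$ a linear order on $[1,t]$; $\Theta(i)$ non-zero with $\mathrm{Hom}(\Theta(j),\Theta(i))=0$ for $j>i$; $Q(i)$ indecomposable with $Q=\bigoplus Q(i)$ satisfying $\mathrm{Hom}(Q,\Theta(j)[\pm1])=0$ for all $j$; for each $i$ a distinguished triangle $K(i)\to Q(i)\xrightarrow{\beta_i}\Theta(i)\to K(i)[1]$ with $K(i)\in\mathfrak{F}(\{\Theta(j):j>i\})$, $\mathrm{Hom}(K(i)[1],\Theta(i))=0$.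 $\mathcal{P}(\Theta)=\{X:\mathrm{Hom}(X,L[1])=0\ \forall L\in\mathfrak{F}(\Theta)\}$. A $\mathcal{P}(\Theta)$-cover of $C$ is a morphism $f:X\to C$ with $X\in\mathcal{P}(\Theta)$ such that every morphism $X'\to C$ with $X'\in\mathcal{P}(\Theta)$ factors through $f$, and $f$ is right minimal (any $g:X\to X$ with $fg=f$ is an isomorphism). *)

(* Defs.v *)
From HB Require Import structures.
From mathcomp Require Import all_boot all_order all_algebra.

Set Implicit Arguments.
Unset Strict Implicit.
Unset Printing Implicit Defensive.

Import Order.TTheory GRing.Theory.
Local Open Scope ring_scope.

Record TriCat (R : comPzRingType) := {
  Ob : Type;
  THom : Ob -> Ob -> lmodType R;
  tcomp : forall X Y Z : Ob, THom Y Z -> THom X Y -> THom X Z;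
  idm : forall X : Ob, THom X X;
  sh : Ob -> Ob;
  shinv : Ob -> Ob;
  shm : forall X Y : Ob, THom X Y -> THom (sh X) (sh Y);
  dist : forall X Y Z : Ob, THom X Y -> THom Y Z -> THom Z (sh X) -> Prop
}.

Arguments Ob {R}.
Arguments THom {R} t.
Arguments tcomp {R t X Y Z}.
Arguments idm {R t}.
Arguments sh {R t}.
Arguments shinv {R t}.
Arguments shm {R t X Y}.
Arguments dist {R t X Y Z}.

Section Notions.
Variables (R : comPzRingType) (T : TriCat R).
Local Notation Ob := (Ob T).
Local Notation THom := (THom T).
Local Notation idm := (@idm R T).
Local Notation sh := (@sh R T).
Local Notation shinv := (@shinv R T).

Definition is_iso (X Y : Ob) (f : THom X Y) : Prop :=
  exists g : THom Y X, tcomp g f = idm X /\ tcomp f g = idm Y.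

Definition is_zero (X : Ob) : Prop := idm X = 0.

Definition homzero (X Y : Ob) : Prop := forall f : THom X Y, f = 0.

Definition is_dsum2 (A B S : Ob) : Prop :=
  exists (i1 : THom A S) (i2 : THom B S) (p1 : THom S A) (p2 : THom S B),
    [/\ tcomp p1 i1 = idm A, tcomp p2 i2 = idm B, tcomp p1 i2 = 0,
        tcomp p2 i1 = 0 & tcomp i1 p1 + tcomp i2 p2 = idm S].

Definition is_dsum (n : nat) (A : 'I_n -> Ob) (S : Ob) : Prop :=
  exists (i : forall k, THom (A k) S) (p : forall k, THom S (A k)),
    [/\ forall k, tcomp (p k) (i k) = idm (A k),
        forall k l, k != l -> tcomp (p k) (i l) = 0
      & \sum_(k < n) tcomp (i k) (p k) = idm S].

Definition local_end (X : Ob) : Prop :=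
  ~ is_zero X /\ forall f : THom X X, is_iso f \/ is_iso (idm X - f).

Definition indecomposable (X : Ob) : Prop :=
  ~ is_zero X /\ forall A B, is_dsum2 A B X -> is_zero A \/ is_zero B.

Definition is_ideal (I : R -> Prop) : Prop :=
  [/\ I 0, forall x y, I x -> I y -> I (x + y) & forall r x, I x -> I (r * x)].

Definition artinian_ring : Prop :=
  forall I : nat -> R -> Prop, (forall n, is_ideal (I n)) ->
    (forall n x, I n.+1 x -> I n x) ->
    exists N, forall n, (N <= n)%N -> forall x, I n x <-> I N x.

Definition fin_gen_homs : Prop :=
  forall X Y : Ob, exists s : seq (THom X Y),
    forall f : THom X Y, exists c : 'I_(size s) -> R,
      f = \sum_(k < size s) c k *: s`_k.

Definition artin_triangulated : Prop :=
  [/\ [/\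
   [/\ forall X Y Z W (f : THom Z W) (g : THom Y Z) (h : THom X Y),
         tcomp f (tcomp g h) = tcomp (tcomp f g) h,
       forall X Y (f : THom X Y), tcomp (idm Y) f = f
     & forall X Y (f : THom X Y), tcomp f (idm X) = f],
   [/\ forall X Y Z (a : R) (f g : THom Y Z) (h : THom X Y),
         tcomp (a *: f + g) h = a *: tcomp f h + tcomp g h
     & forall X Y Z (a : R) (f : THom Y Z) (g h : THom X Y),
         tcomp f (a *: g + h) = a *: tcomp f g + tcomp f h],
   [/\ exists Z : Ob, is_zero Z
     & forall A B : Ob, exists S, is_dsum2 A B S],
   [/\ (forall X Y Z (f : THom Y Z) (g : THom X Y),
         shm (tcomp f g) = tcomp (shm f) (shm g)),
       (forall X, shm (idm X) = idm (sh X)),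
       (forall X Y (a : R) (f g : THom X Y), shm (a *: f + g) = a *: shm f + shm g),
       ((forall X, sh (shinv X) = X) /\ (forall X, shinv (sh X) = X))
     & (forall X Y, bijective (@shm R T X Y))]
   &
   [/\ forall X Y Z X' Y' Z' (f : THom X Y) (g : THom Y Z) (h : THom Z (sh X))
          (f' : THom X' Y') (g' : THom Y' Z') (h' : THom Z' (sh X'))
          (a : THom X X') (b : THom Y Y') (c : THom Z Z'),
         dist f g h -> is_iso a -> is_iso b -> is_iso c ->
         tcomp f' a = tcomp b f -> tcomp g' b = tcomp c g ->
         tcomp h' c = tcomp (shm a) h -> dist f' g' h',
       forall X Z, is_zero Z -> dist (idm X) (0 : THom X Z) (0 : THom Z (sh X))
     & forall X Y (f : THom X Y), exists Z (g : THom Y Z) (h : THom Z (sh X)),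
         dist f g h]],
   (forall X Y Z (f : THom X Y) (g : THom Y Z) (h : THom Z (sh X)),
       dist f g h <-> dist g h (- shm f)),
   (forall X Y Z X' Y' Z' (f : THom X Y) (g : THom Y Z) (h : THom Z (sh X))
          (f' : THom X' Y') (g' : THom Y' Z') (h' : THom Z' (sh X'))
          (a : THom X X') (b : THom Y Y'),
       dist f g h -> dist f' g' h' -> tcomp f' a = tcomp b f ->
       exists c : THom Z Z', tcomp g' b = tcomp c g /\ tcomp h' c = tcomp (shm a) h),
   (forall X Y Z Z' X' Y' (f : THom X Y) (g : THom Y Z)
          (i : THom Y Z') (i' : THom Z' (sh X))
          (k : THom Z X') (k' : THom X' (sh Y))
          (j : THom Z Y') (j' : THom Y' (sh X)),
       dist f i i' -> dist g k k' -> dist (tcomp g f) j j' ->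
       exists (u : THom Z' Y') (v : THom Y' X'),
         [/\ dist u v (tcomp (shm i) k'), tcomp u i = tcomp j g,
             tcomp j' u = i', tcomp v j = k & tcomp (shm f) j' = tcomp k' v])
 & [/\ artinian_ring, fin_gen_homs
     &
       forall X : Ob, exists n (A : 'I_n -> Ob),
         (forall k, local_end (A k)) /\ is_dsum A X]].

(* The subcategory F(C): objects with a finite filtration by triangles
   M_{k-1} -> M_k -> X_k -> M_{k-1}[1], k = 0..n, M_{-1} = 0 = X_0, M_n = M,
   X_k in C for k >= 1.  Here N k stands for M_{k-1}. *)
Definition inF (C : Ob -> Prop) (M : Ob) : Prop :=
  exists (n : nat) (N X : nat -> Ob) (u : forall k, THom (N k) (N k.+1))
         (v : forall k, THom (N k.+1) (X k)) (w : forall k, THom (X k) (sh (N k))),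
    [/\ is_zero (N 0%N), is_zero (X 0%N), N n.+1 = M,
        forall k, (1 <= k <= n)%N -> C (X k)
      & forall k, (k <= n)%N -> dist (u k) (v k) (w k)].

Definition theta_class (t : nat) (Theta : 'I_t -> Ob) (P : 'I_t -> bool)
  (X : Ob) : Prop := exists j, P j /\ X = Theta j.

Definition linear_order (t : nat) (le : rel 'I_t) : Prop :=
  [/\ reflexive le, antisymmetric le, transitive le & total le].

(* j > i in the order le *)
Definition gtr (t : nat) (le : rel 'I_t) (i j : 'I_t) : bool :=
  le i j && (i != j).

Definition theta_proj_system (t : nat) (le : rel 'I_t) (Theta Q : 'I_t -> Ob)
  (beta : forall i, THom (Q i) (Theta i)) : Prop :=
  [/\ linear_order le,
      (forall i, ~ is_zero (Theta i)) /\
        (forall i j, gtr le i j -> homzero (Theta j) (Theta i)),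
      (forall i, indecomposable (Q i)),
      (exists S, is_dsum Q S /\
        forall j, homzero S (sh (Theta j)) /\ homzero S (shinv (Theta j)))
    & forall i, exists (K : Ob) (u : THom K (Q i)) (w : THom (Theta i) (sh K)),
        [/\ dist u (beta i) w,
            inF (theta_class Theta (gtr le i)) K
          & homzero (sh K) (Theta i)]].

Definition inP (t : nat) (Theta : 'I_t -> Ob) (X : Ob) : Prop :=
  forall L, inF (theta_class Theta predT) L -> homzero X (sh L).

Definition is_cover (P : Ob -> Prop) (X C : Ob) (f : THom X C) : Prop :=
  [/\ P X,
      forall X' (g : THom X' C), P X' -> exists h : THom X' X, tcomp f h = g
    & forall g : THom X X, tcomp f g = f -> is_iso g].

End Notions.
Arguments theta_proj_system {R T t} le Theta Q beta.

(* Main.v *)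
Require Import Defs.
From mathcomp Require Import all_boot all_order all_algebra.
From Stdlib Require Import Classical ClassicalEpsilon.

Set Implicit Arguments.
Unset Strict Implicit.
Unset Printing Implicit Defensive.
Import GRing.Theory.

Section Aux.
Local Open Scope ring_scope.
Variables (R : comPzRingType) (T : TriCat R).
Hypothesis HT : artin_triangulated T.
Local Notation Ob := (Ob T).
Local Notation Hom := (THom T).
Local Notation idT := (@idm R T).
Local Notation "f <o g" := (tcomp f g) (at level 40, left associativity).

Lemma assoc X Y Z W (f : Hom Z W) (g : Hom Y Z) (h : Hom X Y) :
  f <o (g <o h) = f <o g <o h.
Proof. by case: HT => [[[a _ _] _ _ _ _] _ _ _ _]; apply: a. Qed.
Lemma idl X Y (f : Hom X Y) : idT Y <o f = f.
Proof. by case: HT => [[[_ a _] _ _ _ _] _ _ _ _]; apply: a. Qed.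
Lemma idr X Y (f : Hom X Y) : f <o idT X = f.
Proof. by case: HT => [[[_ _ a] _ _ _ _] _ _ _ _]; apply: a. Qed.
Lemma compDl X Y Z (f g : Hom Y Z) (h : Hom X Y) : (f + g) <o h = f <o h + g <o h.
Proof.
case: HT => [[_ [a _] _ _ _] _ _ _ _].
by have := a _ _ _ 1 f g h; rewrite !scale1r.
Qed.
Lemma compDr X Y Z (f : Hom Y Z) (g h : Hom X Y) : f <o (g + h) = f <o g + f <o h.
Proof.
case: HT => [[_ [_ a] _ _ _] _ _ _ _].
by have := a _ _ _ 1 f g h; rewrite !scale1r.
Qed.
Lemma comp0l X Y Z (h : Hom X Y) : (0 : Hom Y Z) <o h = 0.
Proof.
apply: (@addrI _ ((0 : Hom Y Z) <o h)).
by rewrite -compDl !addr0.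
Qed.
Lemma comp0r X Y Z (f : Hom Y Z) : f <o (0 : Hom X Y) = 0.
Proof.
apply: (@addrI _ (f <o (0 : Hom X Y))).
by rewrite -compDr !addr0.
Qed.
Lemma compNl X Y Z (f : Hom Y Z) (h : Hom X Y) : (- f) <o h = - (f <o h).
Proof. by apply/eqP; rewrite -addr_eq0 -compDl addNr comp0l. Qed.
Lemma compNr X Y Z (f : Hom Y Z) (h : Hom X Y) : f <o (- h) = - (f <o h).
Proof. by apply/eqP; rewrite -addr_eq0 -compDr addNr comp0r. Qed.
Lemma compBl X Y Z (f g : Hom Y Z) (h : Hom X Y) : (f - g) <o h = f <o h - g <o h.
Proof. by rewrite compDl compNl. Qed.
Lemma compBr X Y Z (f : Hom Y Z) (g h : Hom X Y) : f <o (g - h) = f <o g - f <o h.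
Proof. by rewrite compDr compNr. Qed.
Lemma compsuml X Y Z I (r : seq I) (P : pred I) (F : I -> Hom Y Z) (h : Hom X Y) :
  (\sum_(k <- r | P k) F k) <o h = \sum_(k <- r | P k) (F k <o h).
Proof.
elim/big_rec2: _ => [|k a b _ <-]; first by rewrite comp0l.
by rewrite compDl.
Qed.
Lemma compsumr X Y Z I (r : seq I) (P : pred I) (f : Hom Y Z) (F : I -> Hom X Y) :
  f <o (\sum_(k <- r | P k) F k) = \sum_(k <- r | P k) (f <o F k).
Proof.
elim/big_rec2: _ => [|k a b _ <-]; first by rewrite comp0r.
by rewrite compDr.
Qed.

Lemma shmC X Y Z (f : Hom Y Z) (g : Hom X Y) : shm (f <o g) = shm f <o shm g.
Proof. by case: HT => [[_ _ _ [a _ _ _ _] _] _ _ _ _]; apply: a. Qed.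
Lemma shmid X : shm (idT X) = idT (sh X).
Proof. by case: HT => [[_ _ _ [_ a _ _ _] _] _ _ _ _]; apply: a. Qed.
Lemma shmD X Y (f g : Hom X Y) : shm (f + g) = shm f + shm g.
Proof.
case: HT => [[_ _ _ [_ _ a _ _] _] _ _ _ _].
by have := a _ _ 1 f g; rewrite !scale1r.
Qed.
Lemma shm0 X Y : shm (0 : Hom X Y) = 0.
Proof. by apply: (@addrI _ (shm (0 : Hom X Y))); rewrite -shmD !addr0. Qed.
Lemma shmN X Y (f : Hom X Y) : shm (- f) = - shm f.
Proof. by apply/eqP; rewrite -addr_eq0 -shmD addNr shm0. Qed.
Lemma shm_bij X Y : bijective (@shm R T X Y).
Proof. by case: HT => [[_ _ _ [_ _ _ _ a] _] _ _ _ _]; apply: a. Qed.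
Lemma shm_inj X Y : injective (@shm R T X Y).
Proof. exact: bij_inj (shm_bij X Y). Qed.
Lemma shm_surj X Y (c : Hom (sh X) (sh Y)) : exists b, shm b = c.
Proof. by case: (shm_bij X Y) => g _ gK; exists (g c); rewrite gK. Qed.

Lemma tr2 X Y Z (f : Hom X Y) (g : Hom Y Z) (h : Hom Z (sh X)) :
  dist f g h <-> dist g h (- shm f).
Proof. by case: HT => [_ a _ _ _]; apply: a. Qed.
Lemma tr3 X Y Z X' Y' Z' (f : Hom X Y) (g : Hom Y Z) (h : Hom Z (sh X))
          (f' : Hom X' Y') (g' : Hom Y' Z') (h' : Hom Z' (sh X'))
          (a : Hom X X') (b : Hom Y Y') :
       dist f g h -> dist f' g' h' -> f' <o a = b <o f ->
       exists c : Hom Z Z', g' <o b = c <o g /\ h' <o c = shm a <o h.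
Proof. by case: HT => [_ _ H _ _]; apply: H. Qed.
Lemma tr1z X Z : is_zero Z -> dist (idT X) (0 : Hom X Z) (0 : Hom Z (sh X)).
Proof. by case: HT => [[_ _ _ _ [_ a _]] _ _ _ _]; apply: a. Qed.
Lemma zobj : exists Z : Ob, is_zero Z.
Proof. by case: HT => [[_ _ [a _] _ _] _ _ _ _]. Qed.
Lemma dsum2_ex (A B : Ob) : exists S, is_dsum2 A B S.
Proof. by case: HT => [[_ _ [_ a] _ _] _ _ _ _]. Qed.
Lemma ks (X : Ob) : exists n (A : 'I_n -> Ob),
         (forall k, local_end (A k)) /\ is_dsum A X.
Proof. by case: HT => [_ _ _ _ [_ _ a]]. Qed.

Lemma zero_to X Z (f : Hom X Z) : is_zero Z -> f = 0.
Proof. by move=> z; rewrite -[f]idl z comp0l. Qed.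
Lemma zero_from X Z (f : Hom Z X) : is_zero Z -> f = 0.
Proof. by move=> z; rewrite -[f]idr z comp0r. Qed.
Lemma zero_sh (Z : Ob) : is_zero Z -> is_zero (sh Z).
Proof. by move=> z; rewrite /is_zero -shmid z shm0. Qed.


Lemma exact_cov X Y Z (f : Hom X Y) (g : Hom Y Z) (h : Hom Z (sh X)) :
  dist f g h -> forall W (a : Hom W Y), g <o a = 0 -> exists b, f <o b = a.
Proof.
move=> D W a ga.
have [Z0 z0] := zobj.
have D1 := tr1z W z0.
move/tr2: D1 => D1.
move/tr2: D => D.
have E : g <o a = (0 : Hom Z0 Z) <o (0 : Hom W Z0) by rewrite ga comp0l.
have [c [_ Hc]] := @tr3 _ _ _ _ _ _ _ _ _ _ _ _ a 0 D1 D E.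
have [b Eb] := shm_surj c; rewrite -Eb in Hc.
exists b; apply: shm_inj.
move/eqP: Hc; rewrite compNl compNr shmid idr eqr_opp shmC => /eqP //.
Qed.

Lemma exact_contra X Y Z (f : Hom X Y) (g : Hom Y Z) (h : Hom Z (sh X)) :
  dist f g h -> forall W (a : Hom Y W), a <o f = 0 -> exists c, c <o g = a.
Proof.
move=> D W a af.
have [Z0 z0] := zobj.
have D2 : dist (0 : Hom Z0 W) (idT W) (0 : Hom W (sh Z0)).
  by apply/tr2; rewrite shm0 oppr0; apply: tr1z; apply: zero_sh.
have E : (0 : Hom Z0 W) <o (0 : Hom X Z0) = a <o f by rewrite af comp0l.
have [c [Hc _]] := @tr3 _ _ _ _ _ _ _ _ _ _ _ _ 0 a D D2 E.
by exists c; rewrite -Hc idl.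
Qed.

Lemma rot3 X Y Z (f : Hom X Y) (g : Hom Y Z) (h : Hom Z (sh X)) :
  dist f g h -> dist (- shm f) (- shm g) (- shm h).
Proof. by move/tr2/tr2/tr2. Qed.

Lemma inF_mono (C C' : Ob -> Prop) L :
  (forall X, C X -> C' X) -> inF C L -> inF C' L.
Proof.
move=> CC [n [N [X [u [v [w [h1 h2 h3 h4 h5]]]]]]].
exists n, N, X, u, v, w; split=> // k hk; exact: CC (h4 k hk).
Qed.

Lemma homzero_F (Y : Ob) (C : Ob -> Prop) :
  (forall X, C X -> homzero Y (sh X)) -> forall L, inF C L -> homzero Y (sh L).
Proof.
move=> HC L [n [N [X [u [v [w [h1 h2 h3 h4 h5]]]]]]].
subst L.
suff H : forall k, (k <= n.+1)%N -> homzero Y (sh (N k)) by apply: H.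
elim=> [_|k IH hk]; first by move=> a; apply: zero_to; apply: zero_sh.
have hkn : (k <= n)%N by [].
have D := rot3 (h5 k hkn).
have hX : homzero Y (sh (X k)).
  case: k IH hk hkn D => [|k] IH hk hkn D.
    by move=> b; apply: zero_to; apply: zero_sh.
  by apply: HC; apply: h4.
move=> a.
have [b Hb] := exact_cov D (hX (- shm (v k) <o a)).
by rewrite -Hb (IH (ltnW hk) b) comp0r.
Qed.

Lemma summand_homzero n (A : 'I_n -> Ob) S (Y : Ob) k :
  is_dsum A S -> homzero S Y -> homzero (A k) Y.
Proof.
move=> [i [p [hpi _ _]]] HS a.
by rewrite -[a]idr -hpi assoc (HS (a <o p k)) comp0l.
Qed.


Lemma dsum_exists n (A : 'I_n -> Ob) : exists S, is_dsum A S.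
Proof.
elim: n A => [|n IH] A.
  have [Z z] := zobj.
  exists Z, (fun k => 0), (fun k => 0); split; try by case.
  by rewrite big_ord0 z.
have [S' [i' [p' [hpi' hpk' hs']]]] := IH (fun l => A (lift ord0 l)).
have [S [i1 [i2 [p1 [p2 [e11 e22 e12 e21 es]]]]]] := dsum2_ex (A ord0) S'.
pose E (k : 'I_n.+1) : Hom S S :=
  if unlift ord0 k is Some l then i2 <o (i' l <o p' l) <o p2 else i1 <o p1.
have H : forall k, exists ip : Hom (A k) S * Hom S (A k),
    ip.2 <o ip.1 = idT (A k) /\ ip.1 <o ip.2 = E k.
  move=> k; case: (unliftP ord0 k) => [l ->|->].
    exists (i2 <o i' l, p' l <o p2); split => /=.
      by rewrite assoc -(assoc _ p2 i2) e22 idr hpi'.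
    by rewrite /E liftK !assoc.
  exists (i1, p1); split => //=.
  by rewrite /E unlift_none.
pose ip k := proj1_sig (constructive_indefinite_description _ (H k)).
have Hip k : (ip k).2 <o (ip k).1 = idT (A k) /\ (ip k).1 <o (ip k).2 = E k :=
  proj2_sig (constructive_indefinite_description _ (H k)).
have EE : forall k l, k != l -> E k <o E l = 0.
  move=> k l; case: (unliftP ord0 k) => [l1 ->|->];
    case: (unliftP ord0 l) => [l2 ->|->] //.
  - move=> ne; rewrite /E !liftK !assoc -(assoc _ p2 i2) e22 idr.
    rewrite -(assoc _ (p' l1) (i' l2)) hpk' ?comp0r ?comp0l //.
  - by move=> _; rewrite /E liftK unlift_none !assoc -(assoc _ p2 i1) e21 comp0r comp0l.
  - by move=> _; rewrite /E liftK unlift_none !assoc -(assoc _ p1 i2) e12 comp0r !comp0l.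
have Esum : \sum_k E k = idT S.
  rewrite big_ord_recl -es.
  have -> : \sum_(l < n) E (lift ord0 l) = i2 <o p2.
    rewrite (eq_bigr (fun l => i2 <o (i' l <o p' l) <o p2)); last first.
      by move=> l _; rewrite /E liftK.
    by rewrite -compsuml -compsumr hs' idr.
  by rewrite /E unlift_none.
exists S, (fun k => (ip k).1), (fun k => (ip k).2); split.
- by move=> k; case: (Hip k).
- move=> k l kl.
  have [a1 b1] := Hip k; have [a2 b2] := Hip l.
  have -> : (ip k).2 <o (ip l).1 = (ip k).2 <o E k <o E l <o (ip l).1.
    rewrite -b1 -b2 !assoc a1 idl -(assoc _ (ip l).2 (ip l).1) a2 idr.
    by [].
  by rewrite -(assoc _ (E k) (E l)) EE // comp0r comp0l.
- rewrite -Esum; apply: eq_bigr => k _; by case: (Hip k).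
Qed.

Lemma iso_conj (Q A : Ob) (ik : Hom A Q) (pk : Hom Q A) (g : Hom A A) :
  ik <o pk = idT Q -> pk <o ik = idT A -> is_iso g -> is_iso (ik <o g <o pk).
Proof.
move=> Hik Hpi [h [h1 h2]]; exists (ik <o h <o pk); split.
  by rewrite !assoc -(assoc _ pk ik) Hpi idr -(assoc _ h g) h1 idr Hik.
by rewrite !assoc -(assoc _ pk ik) Hpi idr -(assoc _ g h) h2 idr Hik.
Qed.

Lemma indec_local (Q : Ob) : indecomposable Q -> local_end Q.
Proof.
move=> [nz ind].
have [n [A [loc [i [p [hpi hpk hs]]]]]] := ks Q.
have [k nzk] : exists k, ~ is_zero (A k).
  apply: NNPP => Hn; apply: nz.
  rewrite /is_zero -hs big1 // => k _.
  have zk : is_zero (A k) by apply: NNPP => H; apply: Hn; exists k.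
  by rewrite -[i k]idr zk comp0r comp0l.
have [S' [i' [p' [hpi' hpk' hs']]]] := dsum_exists (fun l : 'I_n.-1 => A (lift k l)).
pose i2 : Hom S' Q := \sum_(l < n.-1) i (lift k l) <o p' l.
pose p2 : Hom Q S' := \sum_(l < n.-1) i' l <o p (lift k l).
have e22 : p2 <o i2 = idT S'.
  rewrite /p2 /i2 compsuml -hs'; apply: eq_bigr => l _.
  rewrite compsumr (bigD1 l) //= big1 ?addr0.
    by rewrite !assoc -(assoc _ (p (lift k l)) (i (lift k l))) hpi idr.
  move=> j jl; rewrite !assoc -(assoc _ (p (lift k l)) (i (lift k j))) hpk ?comp0r ?comp0l //.
  by rewrite (inj_eq (@lift_inj _ k)) eq_sym.
have e12 : p k <o i2 = 0.
  rewrite /i2 compsumr big1 // => l _; rewrite assoc hpk ?comp0l //.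
  exact: neq_lift.
have e21 : p2 <o i k = 0.
  rewrite /p2 compsuml big1 // => l _; rewrite -assoc hpk ?comp0r //.
  by rewrite eq_sym neq_lift.
have es : i k <o p k + i2 <o p2 = idT Q.
  rewrite -hs (bigD1_ord k) //=; congr (_ + _).
  rewrite /i2 /p2 compsuml; apply: eq_bigr => l _.
  rewrite compsumr (bigD1 l) //= big1 ?addr0.
    by rewrite !assoc -(assoc _ (p' l) (i' l)) hpi' idr.
  move=> j jl; rewrite !assoc -(assoc _ (p' l) (i' j)) hpk' ?comp0r ?comp0l //.
  by rewrite eq_sym.
have D : is_dsum2 (A k) S' Q by exists (i k), i2, (p k), p2; split.
have Hik : i k <o p k = idT Q.
  case: (ind _ _ D) => // zS.
  by rewrite -es (zero_from i2 zS) comp0l addr0.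
split => // f.
pose g := p k <o f <o i k.
have fE : f = i k <o g <o p k.
  rewrite /g !assoc Hik idl -assoc Hik idr //.
case: ((loc k).2 g) => Hg; [left | right].
  by rewrite fE; apply: iso_conj.
have -> : idT Q - f = i k <o (idT (A k) - g) <o p k.
  by rewrite compBr compBl idr Hik -fE.
exact: iso_conj.
Qed.


Lemma cover_a t (le : rel 'I_t) (Theta Q : 'I_t -> Ob)
  (beta : forall i, Hom (Q i) (Theta i)) :
  theta_proj_system le Theta Q beta -> forall i, is_cover (inP Theta) (beta i).
Proof.
rewrite /theta_proj_system => -[lo [nzT homT] indQ [S [dS hS]] tri] i.
have QP : inP Theta (Q i).
  move=> L HL; apply: (homzero_F _ HL) => X [j [_ ->]].
  exact: summand_homzero dS (proj1 (hS j)).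
have [K [u [w [D FK hK]]]] := tri i.
have D' : dist (beta i) w (- shm u) by move/tr2: D.
split => //.
  move=> X' g HX'.
  have FK' : inF (theta_class Theta predT) K.
    by apply: inF_mono FK => X [j [_ ->]]; exists j.
  have wg : w <o g = 0 := HX' K FK' (w <o g).
  have [h Hh] := exact_cov D' wg.
  by exists h.
move=> g Hg.
have [_ lg] := indec_local (indQ i).
case: (lg g) => // [[h [h1 h2]]].
have e : beta i <o (idT _ - g) = 0 by rewrite compBr idr Hg subrr.
have b0 : beta i = 0 by rewrite -[beta i]idr -h2 assoc e comp0l.
exfalso; apply: (nzT i).
have e2 : idT (Theta i) <o beta i = 0 by rewrite b0 comp0r.
have [c Hc] := exact_contra D' e2.
by rewrite /is_zero -Hc (hK c) comp0l.
Qed.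

End Aux.

Theorem proposition5p6 (R : comPzRingType) (T : TriCat R)
  (HT : artin_triangulated T) (t : nat) (le : rel 'I_t)
  (Theta Q : 'I_t -> Ob T) (beta : forall i, THom T (Q i) (Theta i)) :
  theta_proj_system le Theta Q beta ->
  (forall i, is_cover (inP Theta) (beta i)) /\
  (forall (Q' : 'I_t -> Ob T) (beta' : forall i, THom T (Q' i) (Theta i)),
     theta_proj_system le Theta Q' beta' ->
     forall i, exists rho : THom T (Q i) (Q' i),
       is_iso rho /\ tcomp (beta' i) rho = beta i).
Proof.
move=> sys; split; first exact: (cover_a HT sys).
move=> Q' beta' sys' i.
have [PQ cov m] := cover_a HT sys i.
have [PQ' cov' m'] := cover_a HT sys' i.
have [h Hh] := cov' (Q i) (beta i) PQ.
have [h' Hh'] := cov (Q' i) (beta' i) PQ'.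
have E1 : tcomp (beta i) (tcomp h' h) = beta i by rewrite (assoc HT) Hh' Hh.
have E2 : tcomp (beta' i) (tcomp h h') = beta' i by rewrite (assoc HT) Hh Hh'.
have [x [x1 x2]] := m _ E1.
have [y [y1 y2]] := m' _ E2.
have ry : tcomp h (tcomp h' y) = idm (Q' i) by rewrite (assoc HT) y2.
have lx : tcomp (tcomp x h') h = idm (Q i) by rewrite -(assoc HT) x1.
have e : tcomp x h' = tcomp h' y.
  by rewrite -[tcomp x h'](idr HT) -ry (assoc HT) lx (idl HT).
exists h; split => //.
by exists (tcomp x h'); split => //; rewrite e ry.
Qed.
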